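(* Let $G$ be a locally finite graph with a periodic proper vertex-coloring. Then $G$ has a periodic proper vertex-coloring with at most $\Delta(G)+1$ colors.
   Context: Locally finite: every vertex has finite degree. $\Delta(G)$ is the maximum degree of $G$. A vertex-coloring is periodic if the subgroup of automorphisms of $G$ mapping each vertex to a vertex of the same color has finitely many orbits on $V(G)$ (in particular a periodic coloring uses finitely many colors). *)

(* Defs.v *)
From Stdlib Require Import List Arith.
Import ListNotations.

Record graph := Graph {
  V : Type;
  adj : V -> V -> Prop;
  adj_sym : forall u v, adj u v -> adj v u;
  adj_irrefl : forall v, ~ adj v v
}.

Definition locally_finite (G : graph) : Prop :=
  forall v : V G, exists s : list (V G), forall u, adj G v u <-> In u s.

Definition deg (G : graph) (v : V G) (n : nat) : Prop :=
  exists s : list (V G), NoDup s /\ (forall u, adj G v u <-> In u s) /\ length s = n.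

(* max_degree G d : Delta(G) = d, i.e. d is the supremum (in nat) of the
   degrees of G (the least upper bound; 0 for the empty graph).
   If degrees are unbounded, no such d exists (Delta(G) = infinity). *)
Definition max_degree (G : graph) (d : nat) : Prop :=
  (forall v n, deg G v n -> n <= d) /\
  (forall d', (forall v n, deg G v n -> n <= d') -> d <= d').

Definition proper_coloring (G : graph) {C : Type} (c : V G -> C) : Prop :=
  forall u v, adj G u v -> c u <> c v.

Definition automorphism (G : graph) (f : V G -> V G) : Prop :=
  (exists g : V G -> V G, (forall x, g (f x) = x) /\ (forall x, f (g x) = x)) /\
  (forall u v, adj G u v <-> adj G (f u) (f v)).

Definition color_preserving_aut (G : graph) {C : Type} (c : V G -> C)
  (f : V G -> V G) : Prop :=
  automorphism G f /\ forall v, c (f v) = c v.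

(* Periodic colouring: the group of colour-preserving automorphisms has finitely
   many orbits on V(G), i.e. there is a finite list of vertices meeting every orbit. *)
Definition periodic_coloring (G : graph) {C : Type} (c : V G -> C) : Prop :=
  exists reps : list (V G), forall v : V G,
    exists r f, In r reps /\ color_preserving_aut G c f /\ f r = v.

(* Main.v *)
Require Import Defs.
From Stdlib Require Import List Arith Lia Classical ClassicalEpsilon.
Import ListNotations.

Definition least (P : nat -> Prop) : nat :=
  epsilon (inhabits 0) (fun k => P k /\ forall j, P j -> k <= j).

Lemma least_ex (P : nat -> Prop) : (exists k, P k) ->
  exists k, P k /\ forall j, P j -> k <= j.
Proof.
  intros [k Hk]. induction k as [k IH] using lt_wf_ind.
  destruct (classic (exists j, j < k /\ P j)) as [[j [Hj1 Hj2]]|Hn].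
  - exact (IH j Hj1 Hj2).
  - exists k; split; [exact Hk|]. intros j Pj.
    destruct (le_lt_dec k j); [assumption|]. exfalso; apply Hn; eauto.
Qed.

Lemma least_spec (P : nat -> Prop) : (exists k, P k) ->
  P (least P) /\ forall j, P j -> least P <= j.
Proof.
  intros H. unfold least. apply (epsilon_spec (inhabits 0) (fun k => P k /\ forall j, P j -> k <= j)).
  apply least_ex; exact H.
Qed.

Lemma least_ext (P Q : nat -> Prop) : (exists k, P k) -> (forall k, P k <-> Q k) ->
  least P = least Q.
Proof.
  intros H HPQ. assert (HQ : exists k, Q k) by (destruct H as [k Hk]; exists k; apply HPQ; auto).
  destruct (least_spec P H) as [A B]. destruct (least_spec Q HQ) as [C D].
  apply Nat.le_antisymm; [apply B; apply HPQ; auto | apply D; apply HPQ; auto].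
Qed.

Fixpoint col (G : graph) (idx : V G -> nat) (n : nat) (v : V G) : nat :=
  match n with
  | 0 => 0
  | S n' => if idx v <? n' then col G idx n' v
            else least (fun k => forall u, adj G v u -> idx u < n' -> col G idx n' u <> k)
  end.

Lemma nodup_ex {A : Type} (l : list A) : exists l', NoDup l' /\ forall x, In x l <-> In x l'.
Proof.
  induction l as [|a l [l' [H1 H2]]].
  - exists []; split; [constructor|simpl; tauto].
  - destruct (classic (In a l')).
    + exists l'; split; auto. intros x; simpl; split.
      * intros [<-|h]; auto; apply H2; auto.
      * intros h; right; apply H2; auto.
    + exists (a :: l'); split; [constructor; auto|]. intros x; simpl; rewrite H2; tauto.
Qed.

Lemma free_ex (G : graph) (idx : V G -> nat) (d : nat) (n : nat) (v : V G) :
  locally_finite G -> max_degree G d ->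
  exists k, k <= d /\ forall u, adj G v u -> idx u < n -> col G idx n u <> k.
Proof.
  intros LF [MD _]. destruct (LF v) as [s Hs]. destruct (nodup_ex s) as [s' [Nd Hs']].
  assert (Hdeg : length s' <= d).
  { apply (MD v). exists s'; repeat split; auto.
    - intros h; apply Hs'; apply Hs; auto.
    - intros h; apply Hs; apply Hs'; auto. }
  destruct (classic (exists k, k <= d /\ ~ In k (map (col G idx n) s'))) as [[k [Hk1 Hk2]]|Hn].
  - exists k; split; auto. intros u Hu _ He. apply Hk2. rewrite <- He. apply in_map.
    apply Hs'; apply Hs; auto.
  - exfalso.
    assert (Hinc : incl (seq 0 (S d)) (map (col G idx n) s')).
    { intros k Hk. apply in_seq in Hk. destruct (classic (In k (map (col G idx n) s'))); auto.
      exfalso; apply Hn; exists k; split; [lia|auto]. }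
    pose proof (NoDup_incl_length (seq_NoDup (S d) 0) Hinc).
    rewrite length_seq, length_map in H. lia.
Qed.

Theorem lemma2p7 (G : graph) (C : Type) (c : V G -> C) :
  locally_finite G ->
  proper_coloring G c ->
  periodic_coloring G c ->
  forall d : nat, max_degree G d ->
  exists c' : V G -> nat,
    proper_coloring G c' /\ periodic_coloring G c' /\ (forall v, c' v <= d).
Proof.
  intros LF PC [reps Hreps] d MD.
  set (cs := map c reps).
  set (idx := fun v => least (fun i => nth_error cs i = Some (c v))).
  assert (Hidx : forall v, nth_error cs (idx v) = Some (c v)).
  { intros v. apply (least_spec (fun i => nth_error cs i = Some (c v))).
    destruct (Hreps v) as [r [f [Hr [[_ Hf] Hfr]]]].
    destruct (In_nth_error _ _ Hr) as [i Hi]. exists i. unfold cs.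
    rewrite nth_error_map, Hi. simpl. rewrite <- Hfr, Hf. reflexivity. }
  assert (Hidx_inj : forall u v, idx u = idx v -> c u = c v).
  { intros u v E. pose proof (Hidx u) as A. rewrite E, Hidx in A. congruence. }
  set (c' := fun v => col G idx (S (idx v)) v).
  assert (Stab : forall m v, idx v < m -> col G idx m v = c' v).
  { induction m as [|m IH]; intros v Hv; [lia|]. simpl.
    destruct (Nat.ltb_spec (idx v) m).
    - apply IH; auto.
    - assert (idx v = m) by lia. subst m. unfold c'. simpl. rewrite Nat.ltb_irrefl. reflexivity. }
  assert (Hc'v : forall v, c' v = least (fun k => forall u, adj G v u -> idx u < idx v -> col G idx (idx v) u <> k)).
  { intros v. unfold c'. simpl. rewrite Nat.ltb_irrefl. reflexivity. }
  assert (Free : forall v, (forall u, adj G v u -> idx u < idx v -> c' u <> c' v) /\ c' v <= d).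
  { intros v. destruct (free_ex G idx d (idx v) v LF MD) as [k [Hk1 Hk2]].
    destruct (least_spec (fun k => forall u, adj G v u -> idx u < idx v -> col G idx (idx v) u <> k))
      as [A B]; [eauto|].
    rewrite <- Hc'v in A, B. split.
    - intros u Hu Hl. rewrite <- (Stab (idx v) u Hl). apply A; auto.
    - specialize (B k Hk2). lia. }
  assert (Inv : forall f, color_preserving_aut G c f -> forall n v, col G idx n (f v) = col G idx n v).
  { intros f [[[g [Hgf Hfg]] Hadj] Hf].
    assert (Hif : forall v, idx (f v) = idx v) by (intros v; unfold idx; rewrite Hf; reflexivity).
    induction n as [|n IH]; intros v; simpl; [reflexivity|].
    rewrite Hif. destruct (idx v <? n); [apply IH|].
    apply least_ext.
    - destruct (free_ex G idx d n (f v) LF MD) as [k [_ Hk]]; eauto.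
    - intros k; split; intros H u Hu Hl.
      + rewrite <- IH. apply H; [exact (proj1 (Hadj _ _) Hu) | rewrite Hif; exact Hl].
      + rewrite <- (Hfg u) in Hu, Hl |- *. rewrite IH. rewrite Hif in Hl.
        apply H; [exact (proj2 (Hadj _ _) Hu) | exact Hl]. }
  exists c'. split; [|split].
  - intros u v Huv.
    assert (Hne : idx u <> idx v).
    { intros E. apply (PC u v Huv). apply Hidx_inj; auto. }
    destruct (proj1 (Nat.lt_gt_cases (idx u) (idx v)) Hne) as [Hl|Hl].
    + apply (proj1 (Free v)); [apply adj_sym; exact Huv | exact Hl].
    + intros E. symmetry in E. revert E. apply (proj1 (Free u)); auto.
  - exists reps. intros v. destruct (Hreps v) as [r [f [Hr [Hf Hfr]]]].
    exists r, f. split; [auto|split; [|auto]]. split; [apply Hf|].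
    intros w. unfold c'. 
    assert (idx (f w) = idx w) by (unfold idx; destruct Hf as [_ Hf]; rewrite Hf; reflexivity).
    rewrite H. apply (Inv f Hf).
  - intros v; apply Free.
Qed.
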